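(* If $\eta_n,\eta\in\mathcal{L}$ and $\eta_n\to\eta$ weakly, then $c_\pi(\eta_n)\to c_\pi(\eta)$.
   Context: $\pi\in(0,1)$, $\epsilon>0$, $B>0$. $\mathcal{L}=\{\eta\in\mathcal{P}(\mathbb{R}):\mathbb{E}_\eta|X|^{1+\epsilon}\le B\}$. $F_\eta(x)=\eta((-\infty,x])$, $x_\pi(\eta)=\min\{z:F_\eta(z)\ge\pi\}$, $c_\pi(\eta)=\frac{F_\eta(x_\pi(\eta))-\pi}{1-\pi}x_\pi(\eta)+\frac{1}{1-\pi}\int_{(x_\pi(\eta),\infty)}y\,dF_\eta(y)$. *)

(* Defs.v *)
From mathcomp Require Import all_boot all_order all_algebra.
From mathcomp Require Import all_classical all_reals all_analysis.
Import Order.TTheory GRing.Theory Num.Theory.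
Import numFieldNormedType.Exports.
Local Open Scope classical_set_scope.
Local Open Scope ring_scope.

Definition in_L {R : realType} (eps B : R) (eta : probability R R) : Prop :=
  (\int[eta]_x ((`|x| `^ (1 + eps))%:E) <= B%:E)%E.

Definition cdf {R : realType} (eta : probability R R) (x : R) : R :=
  fine (eta [set` `]-oo, x]]).

(* x_pi(eta) = min {z : F_eta(z) >= pi}; the minimum is attained by right-continuity
   of F_eta, so it equals the infimum. *)
Definition xpi {R : realType} (pi : R) (eta : probability R R) : R :=
  inf [set z : R | pi <= cdf eta z].

Definition cpi {R : realType} (pi : R) (eta : probability R R) : R :=
  (cdf eta (xpi pi eta) - pi) / (1 - pi) * xpi pi eta
  + (1 - pi)^-1 * Rintegral eta [set` `]xpi pi eta, +oo[] (fun y => y).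

Definition weak_cvg {R : realType} (eta_ : nat -> probability R R)
  (eta : probability R R) : Prop :=
  forall f : R -> R, continuous f -> (exists M : R, forall x, `|f x| <= M) ->
    ((fun n => \int[eta_ n]_x (f x)%:E) @ \oo --> \int[eta]_x (f x)%:E)%E.

(* Main.v *)
Require Import Defs.
From mathcomp Require Import all_boot all_order all_algebra.
From mathcomp Require Import all_classical all_reals all_analysis.
From mathcomp Require Import measurable_realfun ring lra.
Import Order.TTheory GRing.Theory Num.Theory.
Import numFieldNormedType.Exports.
Local Open Scope classical_set_scope.
Local Open Scope ring_scope.

Section S.
Variable R : realType.
Implicit Types (mu : probability R R).

Definition pp (t x : R) : R := Num.max (x - t) 0.

Lemma pp_ge0 t x : 0 <= pp t x.
Proof. by rewrite /pp le_max lexx orbT. Qed.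

Lemma pp_cont t : continuous (pp t).
Proof.
have -> : pp t = (fun x => x - t) \max (cst 0) by [].
apply: max_fun_continuous; last exact: cst_continuous.
move=> x; apply: cvgB; [exact: cvg_id | exact: cvg_cst].
Qed.

Lemma mpp t : measurable_fun setT (fun x => (pp t x)%:E).
Proof. by apply/measurable_EFinP; apply: continuous_measurable_fun; apply: pp_cont. Qed.

Lemma mabs : measurable_fun setT (fun x : R => `|x|%:E).
Proof. by apply/measurable_EFinP; apply: continuous_measurable_fun; apply: norm_continuous. Qed.

Lemma mpow (e : R) : measurable_fun setT (fun x : R => (`|x| `^ e)%:E).
Proof.
apply/measurable_EFinP.
have -> : (fun x : R => `|x| `^ e) = ((powR (R:=R))^~ e) \o (fun x => `|x|) by [].
apply: measurableT_comp; first exact: measurable_powR.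
by apply: continuous_measurable_fun; apply: norm_continuous.
Qed.


Lemma abs_le_pow e (x : R) : 0 <= e -> `|x| <= 1 + `|x| `^ (1 + e).
Proof.
move=> e0; case: (lerP 1 `|x|) => h.
  have h1 : 1 <= 1 + e by rewrite lerDl.
  apply: le_trans (le1r_powR h h1) _.
  by rewrite lerDr.
by apply: le_trans (ltW h) _; rewrite lerDl powR_ge0.
Qed.

Local Open Scope ereal_scope.

Lemma int_abs {eps B : R} {mu : probability R R} : (0 <= eps)%R -> in_L eps B mu ->
  \int[mu]_x (`|x|%:E) <= (1 + B)%:E.
Proof.
move=> e0 hL.
apply: (@le_trans _ _ (\int[mu]_x ((cst 1%R x)%:E + (`|x| `^ (1 + eps))%:E))).
  apply: (ge0_le_integral mu measurableT).
  - by move=> x _; rewrite lee_fin.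
  - exact: mabs.
  - apply: emeasurable_funD; last exact: mpow.
    by apply/measurable_EFinP; exact: measurable_cst.
  - by move=> x _; rewrite -EFinD lee_fin abs_le_pow.
rewrite ge0_integralD //=; try (by move=> x _; rewrite lee_fin ?powR_ge0);
  try exact: mpow; try (by apply/measurable_EFinP; exact: measurable_cst).
rewrite EFinD; apply: leeD; last exact: hL.
by rewrite integral_cst //= probability_setT mule1.
Qed.

Lemma int_pp_le {eps B : R} {mu : probability R R} t : (0 <= eps)%R -> in_L eps B mu ->
  \int[mu]_x ((pp t x)%:E) <= (1 + B + `|t|)%:E.
Proof.
move=> e0 hL.
apply: (@le_trans _ _ (\int[mu]_x (`|x|%:E + (cst `|t| x)%:E))).
  apply: (ge0_le_integral mu measurableT).
  - by move=> x _; rewrite lee_fin pp_ge0.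
  - exact: mpp.
  - apply: emeasurable_funD; first exact: mabs.
    by apply/measurable_EFinP; exact: measurable_cst.
  - move=> x _; rewrite -EFinD lee_fin /pp /= ge_max; apply/andP; split.
      by apply: (le_trans (ler_norm _)); apply: (le_trans (ler_normD _ _)); rewrite normrN.
    by rewrite addr_ge0.
rewrite ge0_integralD //=; try (by move=> x _; rewrite lee_fin ?powR_ge0);
  try exact: mabs; try (by apply/measurable_EFinP; exact: measurable_cst).
rewrite EFinD; apply: leeD; first exact: int_abs hL.
by rewrite integral_cst //= probability_setT mule1.
Qed.

Definition Pf mu t : R := fine (\int[mu]_x ((pp t x)%:E)).

Lemma PfE {eps B : R} {mu : probability R R} t : (0 <= eps)%R -> in_L eps B mu ->
  (Pf mu t)%:E = \int[mu]_x ((pp t x)%:E).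
Proof.
move=> e0 hL; rewrite /Pf fineK // ge0_fin_numE.
  by apply: le_lt_trans (int_pp_le t e0 hL) _; exact: ltry.
by apply: integral_ge0 => x _; rewrite lee_fin pp_ge0.
Qed.

Lemma Pf_ge0 mu t : (0 <= Pf mu t)%R.
Proof. by apply: fine_ge0; apply: integral_ge0 => x _; rewrite lee_fin pp_ge0. Qed.


Lemma int_addc mu (f : R -> R) (c : R) : (forall x, 0 <= f x)%R ->
  measurable_fun setT (fun x => (f x)%:E) -> (0 <= c)%R ->
  \int[mu]_x ((f x + c)%:E) = \int[mu]_x ((f x)%:E) + c%:E.
Proof.
move=> f0 mf c0.
rewrite (_ : (fun x => (f x + c)%:E) = (fun x => (f x)%:E + (cst c x)%:E)); last first.
  by apply: funext => x; rewrite EFinD.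
rewrite ge0_integralD //=; try (by move=> x _; rewrite lee_fin);
  try (by apply/measurable_EFinP; exact: measurable_cst).
by rewrite integral_cst //= probability_setT mule1.
Qed.

Lemma Pf_lip (eps B : R) mu t s : (0 <= eps)%R -> in_L eps B mu ->
  (Pf mu t <= Pf mu s + `|t - s|)%R.
Proof.
move=> e0 hL; rewrite -lee_fin EFinD (PfE t e0 hL) (PfE s e0 hL).
rewrite -int_addc //; last exact: mpp.
  apply: (ge0_le_integral mu measurableT) => //.
  - by move=> x _; rewrite lee_fin pp_ge0.
  - exact: mpp.
  - apply/measurable_EFinP; apply: measurable_funD; last exact: measurable_cst.
    by apply/measurable_EFinP; exact: mpp.
  move=> x _; rewrite lee_fin /pp ge_max; apply/andP; split.
    have -> : (x - t = (x - s) + (s - t))%R by ring.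
    by apply: lerD; [rewrite le_max lexx | rewrite distrC ler_norm].
  by rewrite addr_ge0 // pp_ge0.
by move=> x; apply: pp_ge0.
Qed.

Lemma Pf_low (eps B : R) mu t : (0 <= eps)%R -> in_L eps B mu ->
  (- t - (1 + B) <= Pf mu t)%R.
Proof.
move=> e0 hL; rewrite lerBlDr -lee_fin EFinD (PfE t e0 hL).
apply: le_trans; last first.
  apply: leeD; first exact: lexx.
  exact: int_abs e0 hL.
rewrite -ge0_integralD //; try (by move=> x _; rewrite lee_fin ?pp_ge0);
  try exact: mpp; try exact: mabs.
apply: le_trans; last first.
  apply: (ge0_le_integral mu measurableT (f1 := cst ((Num.max (- t) 0)%:E))).
  - by move=> x _; rewrite /= lee_fin le_max lexx orbT.
  - exact: measurable_cst.
  - by apply: emeasurable_funD; [exact: mpp | exact: mabs].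
  move=> x _; rewrite /= -EFinD lee_fin ge_max addr_ge0 ?pp_ge0 // andbT.
  have -> : (- t = (x - t) + (- x))%R by ring.
  by rewrite /pp; apply: lerD; [rewrite le_max lexx | rewrite -normrN ler_norm].
by rewrite integral_cst //= probability_setT mule1 lee_fin le_max lexx.
Qed.


Lemma cdfE mu x : (Defs.cdf mu x)%:E = mu [set` `]-oo, x]].
Proof. by rewrite /Defs.cdf fineK // fin_num_measure. Qed.

Lemma cdf_le mu x y : (x <= y)%R -> (Defs.cdf mu x <= Defs.cdf mu y)%R.
Proof.
move=> xy; rewrite -lee_fin !cdfE; apply: le_measure; rewrite ?inE //.
by move=> z /=; rewrite !in_itv /= => h; apply: le_trans h xy.
Qed.

Lemma cvg_fine_mu mu (F : nat -> set R) X : measurable X ->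
  mu \o F @ \oo --> mu X -> (fun n => fine (mu (F n))) @ \oo --> fine (mu X).
Proof.
move=> mX h; have e := fineK (fin_num_measure mu X mX); rewrite -e in h.
exact: (fine_cvg h).
Qed.

Lemma cdf_big mu (p : R) : (p < 1)%R -> exists z, (p < Defs.cdf mu z)%R.
Proof.
move=> p1.
pose F := fun n : nat => [set` `]-oo, (n%:R : R)]].
have mF : forall n, measurable (F n) by move=> n; exact: measurable_itv.
have h : (fun n => fine (mu (F n))) @ \oo --> fine (mu (\bigcup_n F n)).
  apply: cvg_fine_mu; first exact: bigcup_measurable.
  apply: nondecreasing_cvg_mu => //; first exact: bigcup_measurable.
  move=> n m nm; apply/subsetPset => z; rewrite /F /= !in_itv /= => h; apply: le_trans h _.
  by rewrite ler_nat.
rewrite (_ : \bigcup_n F n = setT) in h; last first.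
  apply/seteqP; split => // x _ /=; exists (Num.Def.archi_bound `|x|) => //=.
  rewrite /F /= in_itv /=; apply: le_trans (ler_norm x) _.
  exact/ltW/archi_boundP.
rewrite probability_setT /= in h.
have := cvgr_gt _ h p p1; case => N _ HN.
by exists N%:R; apply: HN => /=.
Qed.

Lemma cdf_small mu (p : R) : (0 < p)%R -> exists z, (Defs.cdf mu z < p)%R.
Proof.
move=> p0.
pose F := fun n : nat => [set` `]-oo, (- (n%:R : R))%R]].
have mF : forall n, measurable (F n) by move=> n; exact: measurable_itv.
have h : (fun n => fine (mu (F n))) @ \oo --> fine (mu (\bigcap_n F n)).
  apply: cvg_fine_mu; first exact: bigcap_measurable.
  apply: nonincreasing_cvg_mu => //; first by rewrite ltey_eq fin_num_measure.
    exact: bigcap_measurable.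
  move=> n m nm; apply/subsetPset => z; rewrite /F /= !in_itv /= => h; apply: le_trans h _.
  by rewrite lerN2 ler_nat.
rewrite (_ : \bigcap_n F n = set0) in h; last first.
  apply/seteqP; split => // x /= hx.
  have := hx (Num.Def.archi_bound `|x|) I; rewrite /F /= in_itv /= => h1.
  have h2 := archi_boundP (normr_ge0 x).
  have h3 : (- x <= `|x|)%R by rewrite -normrN ler_norm.
  by move: h1; rewrite lerNr => h1; have := le_lt_trans h1 (le_lt_trans h3 h2); rewrite ltxx.
rewrite measure0 /= in h.
have := cvgr_lt _ h p p0; case => N _ HN.
by exists (- N%:R)%R; apply: HN => /=.
Qed.

Section quant.
Variables (pi : R) (mu : probability R R).
Hypotheses (pi0 : (0 < pi)%R) (pi1 : (pi < 1)%R).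
Let S := [set z : R | (pi <= Defs.cdf mu z)%R].

Lemma S_lb : has_lbound S.
Proof.
have [z0 hz0] := cdf_small mu pi pi0; exists z0 => z Sz.
rewrite leNgt; apply/negP => zz0.
have := cdf_le mu _ _ (ltW zz0); rewrite leNgt => /negP; apply.
exact: lt_le_trans hz0 Sz.
Qed.

Lemma S_ne : nonempty S.
Proof. by have [z hz] := cdf_big mu pi pi1; exists z; exact: ltW. Qed.

Lemma S_inf : has_inf S.
Proof. by split; [exact: S_ne | exact: S_lb]. Qed.

Lemma xpi_lb z : (pi <= Defs.cdf mu z)%R -> (xpi pi mu <= z)%R.
Proof. by move=> h; apply: (ge_inf S_lb). Qed.

Lemma xpi_cdf : (pi <= Defs.cdf mu (xpi pi mu))%R.
Proof.
set q := xpi pi mu.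
rewrite leNgt; apply/negP => hq.
pose F := fun n : nat => [set` `]-oo, (q + n.+1%:R^-1)%R]].
have mF : forall n, measurable (F n) by move=> n; exact: measurable_itv.
have h : (fun n => fine (mu (F n))) @ \oo --> fine (mu (\bigcap_n F n)).
  apply: cvg_fine_mu; first exact: bigcap_measurable.
  apply: nonincreasing_cvg_mu => //; first by rewrite ltey_eq fin_num_measure.
    exact: bigcap_measurable.
  move=> n m nm; apply/subsetPset => z; rewrite /F /= !in_itv /= => h; apply: le_trans h _.
  by rewrite lerD2l lef_pV2 ?posrE // ler_nat.
rewrite (_ : \bigcap_n F n = [set` `]-oo, q]]) in h; last first.
  apply/seteqP; split => x /=; rewrite in_itv /=.
    move=> hx; rewrite leNgt; apply/negP => qx.
    have [k hk] := ltr_add_invr qx.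
    by have := hx k I; rewrite /F /= in_itv /= leNgt hk.
  move=> xq n _; rewrite /F /= in_itv /=; apply: le_trans xq _.
  by rewrite lerDl.
have := cvgr_lt _ h pi hq; case => N _ HN.
have := HN N (leqnn N) => /=.
have e0 : (0 < N.+1%:R^-1 :> R)%R by rewrite invr_gt0 ltr0Sn.
have [e Se he] := inf_adherent e0 S_inf.
have := cdf_le mu _ _ (ltW he); rewrite /Defs.cdf => h1 h2.
have := lt_le_trans (le_lt_trans Se (le_lt_trans h1 h2)) (lexx pi).
by rewrite ltxx.
Qed.

Lemma xpi_left : (fine (mu [set` `]-oo, xpi pi mu[]) <= pi)%R.
Proof.
set q := xpi pi mu.
rewrite leNgt; apply/negP => hq.
pose F := fun n : nat => [set` `]-oo, (q - n.+1%:R^-1)%R]].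
have mF : forall n, measurable (F n) by move=> n; exact: measurable_itv.
have h : (fun n => fine (mu (F n))) @ \oo --> fine (mu (\bigcup_n F n)).
  apply: cvg_fine_mu; first exact: bigcup_measurable.
  apply: nondecreasing_cvg_mu => //; first exact: bigcup_measurable.
  move=> n m nm; apply/subsetPset => z; rewrite /F /= !in_itv /= => h; apply: le_trans h _.
  by rewrite lerD2l lerN2 lef_pV2 ?posrE // ler_nat.
rewrite (_ : \bigcup_n F n = [set` `]-oo, q[]) in h; last first.
  apply/seteqP; split => x /=; rewrite in_itv /=.
    case=> n _; rewrite /F /= in_itv /= => hx; apply: le_lt_trans hx _.
    by rewrite ltrBlDr ltrDl.
  move=> xq; have [k hk] := ltr_add_invr xq.
  by exists k => //; rewrite /F /= in_itv /= lerBrDr ltW.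
have := cvgr_gt _ h pi hq; case => N _ HN.
have := HN N (leqnn N) => /= h1.
have := xpi_lb _ (ltW h1); rewrite -/q => h2.
have h3 : (q - N.+1%:R^-1 < q)%R by rewrite ltrBlDr ltrDl invr_gt0 ltr0Sn.
by have := le_lt_trans h2 h3; rewrite ltxx.
Qed.

End quant.


Lemma pp_integrable (eps B : R) mu t : (0 <= eps)%R -> in_L eps B mu ->
  mu.-integrable setT (fun x => (pp t x)%:E).
Proof.
move=> e0 hL; apply/integrableP; split; first exact: mpp.
rewrite (eq_integral (fun x => (pp t x)%:E)); last first.
  by move=> x _; rewrite gee0_abs // lee_fin pp_ge0.
apply: le_lt_trans (int_pp_le t e0 hL) _; exact: ltry.
Qed.

Lemma int_pp_ind (eps B : R) mu t c D : (0 <= eps)%R -> in_L eps B mu ->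
  measurable D ->
  \int[mu]_x ((pp t x)%:E + c%:E * (\1_D x)%:E) = (Pf mu t + c * fine (mu D))%:E.
Proof.
move=> e0 hL mD; rewrite integralD //; last 2 first.
- exact: pp_integrable e0 hL.
- by apply: integrableZl => //; exact: integrable_indic.
rewrite integralZl //; last exact: integrable_indic.
rewrite integral_indic // setIT.
rewrite -(PfE t e0 hL) EFinD EFinM; congr (_ + _ * _).
by rewrite fineK // fin_num_measure.
Qed.

Lemma memitv_oo (q x : R) : (x \in [set` `]q, +oo[]) = (q < x)%R.
Proof. by rewrite mem_setE /= in_itv /= andbT. Qed.

Lemma memitv_co (q x : R) : (x \in [set` `[q, +oo[]) = (q <= x)%R.
Proof. by rewrite mem_setE /= in_itv /= andbT. Qed.


Lemma cpi_Phi (eps B pi : R) mu : (0 <= eps)%R -> in_L eps B mu -> (pi < 1)%R ->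
  cpi pi mu = (xpi pi mu + Pf mu (xpi pi mu) / (1 - pi))%R.
Proof.
move=> e0 hL pi1.
set q := xpi pi mu.
have mD : measurable [set` `]q, +oo[] by exact: measurable_itv.
have hR : Rintegral mu [set` `]q, +oo[] (fun y => y) =
    (Pf mu q + q * fine (mu [set` `]q, +oo[]))%R.
  rewrite /Rintegral integral_mkcond.
  rewrite (_ : (fun x => x%:E) \_ _ = fun x => (pp q x)%:E + q%:E * (\1_[set` `]q, +oo[] x)%:E); last first.
    apply: funext => x; rewrite patchE indicE memitv_oo /pp.
    case: ltP => h /=.
      rewrite max_l; last by rewrite subr_ge0 ltW.
      by rewrite -EFinM -EFinD mulr1 subrK.
    rewrite max_r; last by rewrite subr_le0.
    by rewrite mule0 adde0.
  by rewrite (@int_pp_ind eps B mu q q _ e0 hL mD).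
have hC : Defs.cdf mu q = (1 - fine (mu [set` `]q, +oo[]))%R.
  apply: EFin_inj; rewrite cdfE -setCitvr probability_setC // EFinB fineK //.
  exact: fin_num_measure.
rewrite /cpi -/q hR hC.
have d0 : (1 - pi != 0)%R by rewrite subr_eq0 eq_sym lt_eqF.
by field.
Qed.


Lemma mfun_ppind t c (D : set R) : measurable D ->
  measurable_fun setT (fun x => (pp t x)%:E + c%:E * (\1_D x)%:E).
Proof.
move=> mD.
rewrite (_ : (fun x => _) = EFin \o (fun x => pp t x + c * \1_D x)%R); last first.
  by apply: funext => x /=; rewrite EFinD EFinM.
apply/measurable_EFinP; apply: measurable_funD.
  by apply/measurable_EFinP; exact: mpp.
apply: (@measurable_funM _ _ _ _ (cst c) (\1_D)); first exact: measurable_cst.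
exact: measurable_indic.
Qed.

Lemma cdf_compl mu q : Defs.cdf mu q = (1 - fine (mu [set` `]q, +oo[]))%R.
Proof.
have h := probability_setC mu (measurable_itv `]q, +oo[).
rewrite setCitvr in h.
by apply: EFin_inj; rewrite cdfE h EFinB fineK //; exact: fin_num_measure.
Qed.

Lemma co_compl mu q : fine (mu [set` `[q, +oo[]) = (1 - fine (mu [set` `]-oo, q[]))%R.
Proof.
have h := probability_setC mu (measurable_itv `]-oo, q[).
rewrite setCitvl in h.
apply: EFin_inj; rewrite fineK; last exact: fin_num_measure.
by rewrite h EFinB fineK //; exact: fin_num_measure.
Qed.

Definition Phi (pi : R) mu t := (t + Pf mu t / (1 - pi))%R.

Lemma Phi_min (eps B pi : R) mu t : (0 <= eps)%R -> in_L eps B mu ->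
  (0 < pi)%R -> (pi < 1)%R -> (Phi pi mu (xpi pi mu) <= Phi pi mu t)%R.
Proof.
move=> e0 hL pi0 pi1.
set q := xpi pi mu.
have d0 : (0 < 1 - pi)%R by rewrite subr_gt0.
have key : (0 <= (t - q) * (1 - pi) + (Pf mu t - Pf mu q))%R.
  case: (lerP q t) => hqt.
  - pose D := [set` `]q, +oo[].
    have mD : measurable D by exact: measurable_itv.
    have ha : (fine (mu D) <= 1 - pi)%R.
      have := xpi_cdf pi mu pi0 pi1; rewrite -/q cdf_compl; lra.
    have hP : (Pf mu q <= Pf mu t + (t - q) * fine (mu D))%R.
      rewrite -lee_fin (PfE q e0 hL) -(@int_pp_ind eps B mu t (t - q) D e0 hL mD).
      apply: (ge0_le_integral mu measurableT).
      + by move=> x _; rewrite lee_fin pp_ge0.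
      + exact: mpp.
      + exact: mfun_ppind.
      move=> x _; rewrite -EFinM -EFinD lee_fin indicE memitv_oo.
      case: ltP => h /=.
        rewrite mulr1 /pp ge_max; apply/andP; split.
          have -> : (x - q = (x - t) + (t - q))%R by ring.
          by apply: lerD; [rewrite le_max lexx | exact: lexx].
        by apply: addr_ge0; [exact: pp_ge0 | rewrite subr_ge0].
      rewrite mulr0 addr0 {1}/pp max_r ?pp_ge0 //.
      by rewrite subr_le0.
    have h1 : (0 <= (t - q) * (1 - pi - fine (mu D)))%R.
      by apply: mulr_ge0; rewrite subr_ge0.
    have h2 : ((t - q) * (1 - pi - fine (mu D)) =
      (t - q) * (1 - pi) - (t - q) * fine (mu D))%R by ring.
    lra.
  - pose D := [set` `[q, +oo[].
    have mD : measurable D by exact: measurable_itv.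
    have hb : (1 - pi <= fine (mu D))%R.
      have := xpi_left pi mu pi0; rewrite /D co_compl -/q; lra.
    have hP : (Pf mu q + (q - t) * fine (mu D) <= Pf mu t)%R.
      rewrite -lee_fin (PfE t e0 hL) -(@int_pp_ind eps B mu q (q - t) D e0 hL mD).
      apply: (ge0_le_integral mu measurableT).
      + move=> x _; rewrite -EFinM -EFinD lee_fin; apply: addr_ge0; first exact: pp_ge0.
        by apply: mulr_ge0; [rewrite subr_ge0 ltW | rewrite indicE ler0n].
      + exact: mfun_ppind.
      + exact: mpp.
      move=> x _; rewrite -EFinM -EFinD lee_fin indicE memitv_co.
      case: (leP q x) => h /=.
        rewrite mulr1 {1}/pp max_l; last by rewrite subr_ge0.
        have -> : (x - q + (q - t) = x - t)%R by ring.
        by rewrite /pp le_max lexx.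
      rewrite mulr0 addr0 {1}/pp max_r ?pp_ge0 //.
      by rewrite subr_le0 ltW.
    have h1 : (0 <= (q - t) * (fine (mu D) - (1 - pi)))%R.
      by apply: mulr_ge0; rewrite subr_ge0 // ltW.
    have h2 : ((q - t) * (fine (mu D) - (1 - pi)) =
      (q - t) * fine (mu D) + (t - q) * (1 - pi))%R by ring.
    lra.
rewrite /Phi -subr_ge0.
have -> : ((t + Pf mu t / (1 - pi)) - (q + Pf mu q / (1 - pi)) =
  ((t - q) * (1 - pi) + (Pf mu t - Pf mu q)) / (1 - pi))%R.
  by field; rewrite subr_eq0 eq_sym lt_eqF.
by apply: divr_ge0 => //; exact: ltW.
Qed.


Section tail.
Local Open Scope ring_scope.
Variables (eps B : R).
Hypotheses (eps0 : (0 < eps)%R) (B0 : (0 < B)%R).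

Definition Kt (A t : R) : R := (2 * (A `^ eps^-1 + `|t|))%R.
Definition gt (A t x : R) : R := Num.min (pp t x) (Kt A t).

Lemma gt_cont A t : continuous (gt A t).
Proof.
have -> : gt A t = (pp t) \min (cst (Kt A t)) by [].
apply: min_fun_continuous; [exact: pp_cont | exact: cst_continuous].
Qed.

Lemma mgt A t : measurable_fun setT (fun x => (gt A t x)%:E).
Proof. by apply/measurable_EFinP; apply: continuous_measurable_fun; apply: gt_cont. Qed.

Lemma gt_ge0 A t x : (0 < A)%R -> (0 <= gt A t x)%R.
Proof.
move=> A0; rewrite /gt le_min pp_ge0 /Kt /=; apply: mulr_ge0 => //.
by apply: addr_ge0 => //; apply: ltW; apply: powR_gt0.
Qed.

Lemma gt_le_pp A t x : (gt A t x <= pp t x)%R.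
Proof. by rewrite /gt ge_min lexx. Qed.

Lemma gt_le_K A t x : (gt A t x <= Kt A t)%R.
Proof. by rewrite /gt ge_min lexx orbT. Qed.

Lemma pp_tail A t x : (0 < A)%R ->
  (pp t x <= gt A t x + (2 / A) * `|x| `^ (1 + eps))%R.
Proof.
move=> A0.
have hpow : (0 <= `|x| `^ (1 + eps))%R by apply: powR_ge0.
have c0 : (0 <= (2 / A) * `|x| `^ (1 + eps))%R.
  by apply: mulr_ge0 => //; apply: divr_ge0 => //; exact: ltW.
case: (leP (pp t x) (Kt A t)) => hK.
  by rewrite /gt min_l // lerDl.
rewrite /gt min_r; last exact: ltW.
set r := A `^ eps^-1.
have r0 : (0 < r)%R by apply: powR_gt0.
have hy : pp t x = (x - t)%R.
  move: hK; rewrite /pp /Kt; case: (leP (x - t) 0) => h.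
    move=> h'; exfalso.
    have h2 : (0 < 2 * (r + `|t|))%R by apply: mulr_gt0 => //; apply: ltr_pwDl.
    by have := lt_trans h2 h'; rewrite ltxx.
  by [].
have hxt : (x - t <= `|x| + `|t|)%R.
  by apply: (le_trans (ler_norm _)); apply: (le_trans (ler_normD _ _)); rewrite normrN.
move: hK; rewrite hy /Kt -/r => hK.
have hxr : (r <= `|x|)%R.
  have := ler_norm t; have := normr_ge0 t; lra.
have hx2 : (x - t < 2 * `|x|)%R by lra.
have hx0 : (x != 0)%R by rewrite -normr_eq0; apply: lt0r_neq0; exact: lt_le_trans r0 hxr.
have hpD : (`|x| `^ (1 + eps) = `|x| * `|x| `^ eps)%R.
  rewrite powRD; last by rewrite normr_eq0 hx0 implybT.
  by rewrite powRr1.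
have hA : (A <= `|x| `^ eps)%R.
  have -> : A = r `^ eps.
    by rewrite /r -powRrM mulVf ?gt_eqF // powRr1 // ltW.
  by apply: ge0_ler_powR => //; [exact: ltW | rewrite nnegrE ltW].
have h3 : (`|x| * A <= `|x| `^ (1 + eps))%R.
  by rewrite hpD; apply: ler_wpM2l => //.
have h4 : (2 * `|x| <= (2 / A) * `|x| `^ (1 + eps))%R.
  apply: le_trans (ler_wpM2l _ h3); last by apply: divr_ge0 => //; exact: ltW.
  by rewrite [`|x| * A]mulrC mulrA divfK ?gt_eqF // mulrC.
have h5 : (0 <= 2 * (r + `|t|))%R by apply: mulr_ge0 => //; apply: addr_ge0 => //; exact: ltW.
lra.
Qed.



Definition Gt mu A t : R := fine (\int[mu]_x ((gt A t x)%:E))%E.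

Lemma GtE mu A t : 0 < A -> (Gt mu A t)%:E = (\int[mu]_x ((gt A t x)%:E))%E.
Proof.
move=> A0; rewrite /Gt fineK // ge0_fin_numE.
  apply: (@le_lt_trans _ _ (\int[mu]_x (cst (Kt A t)%:E x))%E); last first.
    by rewrite integral_cst //= probability_setT mule1 ltry.
  apply: (ge0_le_integral mu measurableT) => //.
  - by move=> x _; rewrite lee_fin gt_ge0.
  - exact: mgt.
  - by move=> x _; rewrite /= lee_fin gt_le_K.
by apply: integral_ge0 => x _; rewrite lee_fin gt_ge0.
Qed.

Lemma Gt_le mu A t : 0 < A -> in_L eps B mu -> Gt mu A t <= Pf mu t.
Proof.
move=> A0 hL; rewrite -lee_fin GtE // (PfE t (ltW eps0) hL).
apply: (ge0_le_integral mu measurableT).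
- by move=> x _; rewrite lee_fin gt_ge0.
- exact: mgt.
- exact: mpp.
by move=> x _; rewrite lee_fin gt_le_pp.
Qed.

Lemma Pf_le_Gt mu A t : 0 < A -> in_L eps B mu -> Pf mu t <= Gt mu A t + 2 / A * B.
Proof.
move=> A0 hL; rewrite -lee_fin (PfE t (ltW eps0) hL) EFinD GtE // EFinM.
have cA : 0 <= 2 / A by apply: divr_ge0 => //; exact: ltW.
apply: (@le_trans _ _ (\int[mu]_x ((gt A t x)%:E + (2 / A)%:E * (`|x| `^ (1 + eps))%:E))%E).
  apply: (ge0_le_integral mu measurableT).
  - by move=> x _; rewrite lee_fin pp_ge0.
  - exact: mpp.
  - apply: emeasurable_funD; first exact: mgt.
    by apply: measurable_funeM; exact: mpow.
  by move=> x _; rewrite -EFinM -EFinD lee_fin pp_tail.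
rewrite ge0_integralD //; last 4 first.
- by move=> x _; rewrite lee_fin gt_ge0.
- exact: mgt.
- by move=> x _; rewrite -EFinM lee_fin; apply: mulr_ge0 => //; apply: powR_ge0.
- by apply: measurable_funeM; exact: mpow.
rewrite (ge0_integralZl mu measurableT (mpow _)); last 2 first.
- by move=> x _; rewrite lee_fin powR_ge0.
- by rewrite lee_fin.
apply: leeD => //; apply: lee_wpmul2l => //; by rewrite lee_fin.
Qed.



Lemma Pf_cvg (eta_ : nat -> probability R R) eta t :
  (forall n, in_L eps B (eta_ n)) -> in_L eps B eta -> weak_cvg eta_ eta ->
  (fun n => Pf (eta_ n) t) @ \oo --> Pf eta t.
Proof.
move=> hLn hL hw; apply/cvgrPdist_le => e e0.
pose A := 6 * B / e.
have A0 : 0 < A by rewrite /A divr_gt0 // mulr_gt0.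
have hAB : 2 / A * B = e / 3.
  rewrite /A; field; apply/andP; split; rewrite ?gt_eqF //.
have hG : (fun n => Gt (eta_ n) A t) @ \oo --> Gt eta A t.
  have hb : exists M : R, forall x, `|gt A t x| <= M.
    by exists (Kt A t) => x; rewrite ger0_norm ?gt_ge0 // gt_le_K.
  have h := hw (gt A t) (gt_cont A t) hb.
  rewrite -(GtE eta A t A0) in h.
  exact: (fine_cvg h).
have e3 : 0 < e / 3 by rewrite divr_gt0.
move/cvgrPdist_le: hG => /(_ (e / 3) e3).
apply: filterS => n hn.
have h1 := Gt_le eta A t A0 hL; have h2 := Pf_le_Gt eta A t A0 hL.
have h3 := Gt_le (eta_ n) A t A0 (hLn n); have h4 := Pf_le_Gt (eta_ n) A t A0 (hLn n).
move: hn; rewrite hAB in h2 h4; rewrite !ler_norml => /andP[h5 h6].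
apply/andP; split; lra.
Qed.

End tail.


Lemma near_all_lt (P : nat -> nat -> Prop) N :
  (forall k, \forall n \near \oo, P k n) ->
  \forall n \near \oo, forall k, (k < N)%N -> P k n.
Proof.
move=> h; elim: N => [|N IH]; first by apply: nearW => n k.
apply: filterS2 IH (h N) => n h1 h2 k; rewrite ltnS leq_eqVlt => /orP[/eqP->//|].
exact: h1.
Qed.

Section main.
Local Open Scope ring_scope.
Variables (pi eps B : R) (eta_ : nat -> probability R R) (eta : probability R R).
Hypotheses (pi0 : 0 < pi) (pi1 : pi < 1) (eps0 : 0 < eps) (B0 : 0 < B).
Hypotheses (hLn : forall n, in_L eps B (eta_ n)) (hL : in_L eps B eta).
Hypothesis hw : weak_cvg eta_ eta.

Let d0 : 0 < 1 - pi. Proof. by rewrite subr_gt0. Qed.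

Lemma Phi_cvg t : (fun n => Phi pi (eta_ n) t) @ \oo --> Phi pi eta t.
Proof.
apply: cvgD; first exact: cvg_cst.
by apply: cvgMl; exact: (@Pf_cvg eps B eps0 B0 eta_ eta t hLn hL hw).
Qed.

Lemma Phi_ge_t mu t : t <= Phi pi mu t.
Proof. by rewrite /Phi lerDl; apply: divr_ge0; [exact: Pf_ge0 | exact: ltW]. Qed.

Lemma Phi_lip mu t s : in_L eps B mu ->
  Phi pi mu s - (1 + (1 - pi)^-1) * `|t - s| <= Phi pi mu t.
Proof.
move=> hm; have h := @Pf_lip eps B mu s t (ltW eps0) hm.
rewrite /Phi -subr_ge0.
have -> : t + Pf mu t / (1 - pi) - (s + Pf mu s / (1 - pi) - (1 + (1 - pi)^-1) * `|t - s|)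
  = ((t - s) + `|t - s|) + (Pf mu t - Pf mu s + `|t - s|) / (1 - pi).
  by field; rewrite subr_eq0 eq_sym lt_eqF.
apply: addr_ge0.
  by have := ler_norm (- (t - s)); rewrite normrN; lra.
apply: divr_ge0; last exact: ltW.
by rewrite distrC; lra.
Qed.

Lemma Phi_low mu t c : in_L eps B mu ->
  t <= - (((1 - pi) * `|c| + 1 + B) / pi) -> c <= Phi pi mu t.
Proof.
move=> hm ht.
have hP := @Pf_low eps B mu t (ltW eps0) hm.
set M := ((1 - pi) * `|c| + 1 + B) / pi in ht.
have hM : M * pi = (1 - pi) * `|c| + 1 + B by rewrite /M divfK ?gt_eqF.
have h1 : M * pi <= - t * pi by apply: ler_wpM2r; [exact: ltW | rewrite lerNr].
have h2 : (1 - pi) * c <= (1 - pi) * `|c| by apply: ler_wpM2l; [exact: ltW | exact: ler_norm].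
have h3 : (1 - pi) * c <= (1 - pi) * t + Pf mu t.
  have -> : (1 - pi) * t = t - t * pi by ring.
  move: h1; rewrite mulNr; lra.
rewrite /Phi -(ler_pM2l d0) mulrDr mulrCA divff ?mulr1 //.
by rewrite gt_eqF.
Qed.

Let c := cpi pi eta.

Lemma c_le_Phi t : c <= Phi pi eta t.
Proof.
rewrite /c (@cpi_Phi eps B pi eta (ltW eps0) hL pi1).
exact: (@Phi_min eps B pi eta t (ltW eps0) hL pi0 pi1).
Qed.

Lemma lower e : 0 < e -> \forall n \near \oo, forall t, c - e <= Phi pi (eta_ n) t.
Proof.
move=> e0.
pose L := 1 + (1 - pi)^-1.
have L0 : 0 < L by rewrite /L ltr_pwDl // invr_ge0 ltW.
pose h := e / (2 * L).
have h0 : 0 < h by rewrite /h divr_gt0 // mulr_gt0.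
have hLh : L * h = e / 2 by rewrite /h; field; rewrite gt_eqF.
pose M := ((1 - pi) * `|c| + 1 + B) / pi.
have M0 : 0 <= M.
  apply: divr_ge0; last exact: ltW.
  apply: addr_ge0; last exact: ltW.
  by apply: addr_ge0 => //; apply: mulr_ge0 => //; exact: ltW.
pose N := Num.Def.archi_bound `|(c + M) / h|.
have hN : (c + M) / h < N%:R.
  exact: le_lt_trans (ler_norm _) (archi_boundP (normr_ge0 _)).
pose s k := - M + k%:R * h.
have e2 : 0 < e / 2 by rewrite divr_gt0.
have hk : forall k, \forall n \near \oo, Phi pi eta (s k) - e / 2 <= Phi pi (eta_ n) (s k).
  move=> k; move/cvgrPdist_le : (Phi_cvg (s k)) => /(_ (e / 2) e2).
  by apply: filterS => n; rewrite ler_norml => /andP[_ h1]; lra.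
have := @near_all_lt (fun k n => Phi pi eta (s k) - e / 2 <= Phi pi (eta_ n) (s k)) N hk.
apply: filterS => n hn t.
case: (lerP c t) => htc.
  apply: le_trans _ (Phi_ge_t _ _); lra.
case: (lerP t (- M)) => htM.
  have := @Phi_low (eta_ n) t c (hLn n) htM; lra.
have hx : 0 <= (t + M) / h by apply: divr_ge0; [lra | exact: ltW].
have /andP[k1 k2] := trunc_itv hx.
set k := Num.Def.trunc ((t + M) / h) in k1 k2.
have kN : (k < N)%N.
  rewrite -(ltr_nat R); apply: le_lt_trans k1 _; apply: lt_trans hN.
  by rewrite ltr_pM2r ?invr_gt0 // ltrD2r.
have hs1 : s k <= t.
  by rewrite /s -lerBrDl opprK -ler_pdivlMr.
have hs2 : t - s k <= h.
  move: k2; rewrite ltr_pdivrMr // -addn1 natrD mulrDl mul1r /s => k3; lra.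
have := Phi_lip (eta_ n) t (s k) (hLn n).
have := hn k kN; have := c_le_Phi (s k).
rewrite ger0_norm ?subr_ge0 //.
have : L * (t - s k) <= L * h by apply: ler_wpM2l => //; exact: ltW.
rewrite -/L; lra.
Qed.



Lemma main_cvg : (fun n => cpi pi (eta_ n)) @ \oo --> c.
Proof.
apply/cvgrPdist_le => e e0.
set q := xpi pi eta.
have hc : c = Phi pi eta q by rewrite /c (@cpi_Phi eps B pi eta (ltW eps0) hL pi1).
move/cvgrPdist_le : (Phi_cvg q) => /(_ e e0) up.
have lo := lower e e0.
apply: filterS2 lo up => n h1 h2.
have hn : cpi pi (eta_ n) = Phi pi (eta_ n) (xpi pi (eta_ n)).
  by rewrite (@cpi_Phi eps B pi (eta_ n) (ltW eps0) (hLn n) pi1).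
have h3 := @Phi_min eps B pi (eta_ n) q (ltW eps0) (hLn n) pi0 pi1.
have h4 := h1 (xpi pi (eta_ n)).
rewrite -hn in h3 h4; rewrite -hc in h2.
move: h2; rewrite !ler_norml => /andP[h5 h6]; apply/andP; split; lra.
Qed.

End main.

End S.

Theorem lemma6 (R : realType) (pi eps B : R) (eta_ : nat -> probability R R)
  (eta : probability R R) :
  0 < pi < 1 -> 0 < eps -> 0 < B ->
  (forall n, in_L eps B (eta_ n)) -> in_L eps B eta ->
  weak_cvg eta_ eta ->
  (fun n => cpi pi (eta_ n)) @ \oo --> cpi pi eta.
Proof.
move=> /andP[pi0 pi1] eps0 B0 hLn hL hw.
exact: (@main_cvg R pi eps B eta_ eta pi0 pi1 eps0 B0 hLn hL hw).
Qed.
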